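(* Let $F\subseteq E(H)$ with $|F|=\ell$. If there exist a tree embedding $(\mathcal T,\mathcal M,y)$ and a set of edges $E_b\subseteq E(\mathcal T)\setminus\mathcal M^{-1}(F)$ such that for every pair $(A,B)\in Z_F$ there is a path in $\mathcal T$ using only edges of $E_b$ connecting a leaf of $A$ to a leaf of $B$, then for every $i\in[q]$ the graph $(V,(E(H)\cup\mathcal M(E_b))\setminus F)$ contains a path from a vertex of $S_i$ to a vertex of $T_i$.
   Context: Standing setup. $G=(V,E)$ is an undirected graph with $n=|V|$, demand-pairs $(S_i,T_i)$, $i\in[q]$, of subsets of $V$. $\ell\ge1$ is an integer and $E_\ell\subseteq E$ an edge set such that in $(V,E_\ell)$ every $(S_i,T_i)$ is $\ell$-edge-connected. $x:E\to[0,1]$ satisfies $x_e=1$ for $e\in E_\ell$ and $\sum_{e\in\delta_G(X)}x_e\ge \ell+1$ for every $i\in[q]$ and every $X$ with $T_i\subseteq X\subseteq V\setminus S_i$. $\beta\ge1$ is a real. $\mathsf{LARGE}=\{e: x_e\ge 1/(4\ell\beta)\}$ and $H=(V,\mathsf{LARGE})$. Capacities: $\tilde x_e=1/(4\ell\beta)$ if $e\in\mathsf{LARGE}$; $\tilde x_e=0$ if $x_e<\frac{1}{2n^2}\cdot\frac1{4\ell\beta}$; $\tilde x_e=x_e$ otherwise. A tree embedding $(\mathcal T,\mathcal M,y)$ of $(G,\tilde x)$: $\mathcal T$ is a tree; $\mathcal M$ maps nodes of $\mathcal T$ to vertices of $G$ and is a bijection between leaves of $\mathcal T$ and $V$ (a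 vertex set of $G$ is identified with the corresponding leaf set); each tree edge $f=(u,v)$ is mapped to a path $\mathcal M(f)$ in $G$ between $\mathcal M(u)$ and $\mathcal M(v)$; $y(f)=\tilde x(\delta_G(X))$ where $(X,V\setminus X)$ is the leaf partition induced by $\mathcal T-f$. $\mathcal M^{-1}(e)=\{f: e\in\mathcal M(f)\}$, $\mathcal M^{-1}(F)=\bigcup_{e\in F}\mathcal M^{-1}(e)$, $\mathcal M(E')=\bigcup_{f\in E'}\mathcal M(f)$. Components: $\mathbb Q^F$ is the set of vertex sets of connected components of $(V,E(H)\setminus F)$; for nonempty $S\subseteq V$, $Q_S$ is the union of those components meeting $S$. A component $Q\in\mathbb Q^F$ is shattered (w.r.t. $\mathcal T$) if its leaves are not all in one connected component of $\mathcal T$ with the edges $\mathcal M^{-1}(F)$ removed, and intact otherwise. $\mathbb U^F_{\mathcal T}$ is the set of all partitions $(A',B')$ (parts may be empty) of the set of shattered components, and $Z_F=\{(A'\cup Q_{S_i},\,B'\cup Q_{T_i}) : (A',B')\in\mathbb U^F_{\mathcal T},\ i\in[q],\ Q_{S_i}\cap Q_{T_i}=\emptyset\}$, where $A'$, $B'$ are identified with the union of their components. *)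

(* Defs.v *)
From HB Require Import structures.
From mathcomp Require Import all_boot all_order all_algebra.
Set Implicit Arguments.
Unset Strict Implicit.
Unset Printing Implicit Defensive.
Import Order.TTheory GRing.Theory Num.Theory.

(* Undirected (multi)graphs: a finite vertex type V, a finite edge type E,
   and the two endpoints src e, dst e of each edge (orientation irrelevant). *)
Section Graph.
Variables (V E : finType) (src dst : E -> V).

Definition grel (D : {set E}) : rel V := fun u v =>
  [exists e in D, ((src e == u) && (dst e == v)) || ((src e == v) && (dst e == u))].

Definition gconnect (D : {set E}) : rel V := connect (grel D).

Definition cut (X : {set V}) : {set E} := [set e | (src e \in X) != (dst e \in X)].

Definition is_path (a b : V) (p : seq E) : Prop :=
  exists vs : seq V,
    [/\ size vs = (size p).+1, head a vs = a, last a vs = b, uniq vs &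
        forall (i : nat) (e0 : E) (v0 : V), (i < size p)%N ->
          let e := nth e0 p i in
          let u := nth v0 vs i in
          let w := nth v0 vs i.+1 in
          ((src e == u) && (dst e == w)) || ((src e == w) && (dst e == u))].

Definition comps (D : {set E}) : {set {set V}} :=
  [set [set w | gconnect D v w] | v : V].

Definition Qof (D : {set E}) (S : {set V}) : {set V} :=
  \bigcup_(Q in comps D | ~~ [disjoint Q & S]) Q.

Definition is_tree : Prop :=
  (forall u v, gconnect [set: E] u v) /\
  (forall f, ~~ gconnect (setT :\ f) (src f) (dst f)).

(* leaf: node of degree at most one (degree 0 only for the one-node tree) *)
Definition leaf (u : V) : bool := (#|[set f | (src f == u) || (dst f == u)]| <= 1)%N.

End Graph.

Section Setup.
Local Open Scope ring_scope.
Variables (R : realFieldType) (V E : finType) (src dst : E -> V).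

Definition large (x : E -> R) (l : nat) (beta : R) : {set E} :=
  [set e | (4%:R * l%:R * beta)^-1 <= x e].

Definition xtilde (x : E -> R) (l : nat) (beta : R) (e : E) : R :=
  if e \in large x l beta then (4%:R * l%:R * beta)^-1
  else if x e < ((2 * #|V| ^ 2)%:R)^-1 * (4%:R * l%:R * beta)^-1 then 0
  else x e.

Variables (N TE : finType) (tsrc tdst : TE -> N) (M : N -> V) (Mp : TE -> seq E).

(* leaf partition induced by T - f: vertices whose leaf is on the side of tsrc f *)
Definition side (f : TE) : {set V} :=
  [set v | [exists u, [&& leaf tsrc tdst u, M u == v &
                          gconnect tsrc tdst (setT :\ f) (tsrc f) u]]].

Definition tree_embedding (xt : E -> R) (y : TE -> R) : Prop :=
  [/\ is_tree tsrc tdst,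
      (forall v : V, exists! u : N, leaf tsrc tdst u /\ M u = v),
      (forall f, is_path src dst (M (tsrc f)) (M (tdst f)) (Mp f)) &
      (forall f, y f = \sum_(e in cut src dst (side f)) xt e)].

Definition Minv (F : {set E}) : {set TE} := [set f | [exists e in F, e \in Mp f]].
Definition Mimg (Eb : {set TE}) : {set E} := [set e | [exists f in Eb, e \in Mp f]].

(* component Q (of (V, E(H) \ F)) is intact: all its leaves lie in one
   component of T with M^{-1}(F) removed *)
Definition intact (F : {set E}) (Q : {set V}) : bool :=
  [forall u1, forall u2,
     [&& leaf tsrc tdst u1, leaf tsrc tdst u2, M u1 \in Q & M u2 \in Q] ==>
     gconnect tsrc tdst (~: Minv F) u1 u2].

Definition shattered (EH F : {set E}) : {set {set V}} :=
  [set Q in comps src dst (EH :\: F) | ~~ intact F Q].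

Definition inZF (EH F : {set E}) (q : nat) (S T : 'I_q -> {set V})
    (AB : {set V} * {set V}) : Prop :=
  exists A' : {set {set V}}, A' \subset shattered EH F /\
    exists i : 'I_q,
      [disjoint Qof src dst (EH :\: F) (S i) & Qof src dst (EH :\: F) (T i)] /\
      AB = (cover A' :|: Qof src dst (EH :\: F) (S i),
            cover (shattered EH F :\: A') :|: Qof src dst (EH :\: F) (T i)).

End Setup.

(* Main.v *)
Require Import Defs.
From HB Require Import structures.
From mathcomp Require Import all_boot all_order all_algebra.
Import Order.TTheory GRing.Theory Num.Theory.
Local Open Scope ring_scope.

Section Helpers.
Context {V E : finType} {src dst : E -> V}.

Lemma grel_sym (D : {set E}) : symmetric (Defs.grel src dst D).
Proof.
move=> u v; rewrite /Defs.grel; apply/existsP/existsP => -[e He]; exists e;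
  by case/andP: He => -> /=; rewrite orbC.
Qed.

Lemma gconnect_sym (D : {set E}) u v : gconnect src dst D u v = gconnect src dst D v u.
Proof. exact: (sym_connect_sym (grel_sym D)). Qed.

Lemma gconnect_trans (D : {set E}) u v w :
  gconnect src dst D u v -> gconnect src dst D v w -> gconnect src dst D u w.
Proof. exact: connect_trans. Qed.

Lemma gconnect_mono (D D' : {set E}) : D \subset D' ->
  forall u v, gconnect src dst D u v -> gconnect src dst D' u v.
Proof.
move=> sub u v; apply: connect_sub => a b /existsP[e /andP[eD h]].
apply: connect1; apply/existsP; exists e; by rewrite (subsetP sub _ eD).
Qed.

Lemma path_gconnect (D : {set E}) a b p : is_path src dst a b p -> {subset p <= D} ->
  gconnect src dst D a b.
Proof.
case=> vs [Hs Hh Hl Hu Hi] pD.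
case: p Hs Hi pD => [|e0 p'] Hs Hi pD.
  case: vs Hs Hh Hl {Hu Hi} => [|v [|]] //= _ -> ->; exact: connect0.
have step : forall k, (k <= size (e0 :: p'))%N -> gconnect src dst D a (nth a vs k).
  elim => [|k IH] hk; first by rewrite nth0 Hh; exact: connect0.
  apply: connect_trans (IH (ltnW hk)) _; apply: connect1; apply/existsP.
  exists (nth e0 (e0 :: p') k); rewrite pD ?mem_nth //=; exact: (Hi k e0 a hk).
have := step _ (leqnn _); by rewrite -Hl -nth_last Hs.
Qed.

Lemma Qof_mem (D : {set E}) (S : {set V}) v : v \in Qof src dst D S ->
  exists2 s, s \in S & gconnect src dst D v s.
Proof.
move/bigcupP => [Q /andP[Qc QS] vQ].
case/imsetP: Qc vQ QS => v0 _ -> vQ QS.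
move: QS; rewrite -setI_eq0 => /set0Pn[s /setIP[sQ sS]].
exists s => //; rewrite inE in vQ; rewrite inE in sQ.
by apply: gconnect_trans sQ; rewrite gconnect_sym.
Qed.

End Helpers.
Arguments Qof_mem {V E src dst D S v}.
Arguments gconnect_trans {V E src dst D u v w}.
Arguments path_gconnect {V E src dst D a b p}.
Arguments gconnect_mono {V E src dst D D'}.


Theorem lemma5p5
  (R : realFieldType) (V E : finType) (src dst : E -> V)
  (q : nat) (S T : 'I_q -> {set V})
  (l : nat) (El : {set E}) (x : E -> R) (beta : R)
  (N TE : finType) (tsrc tdst : TE -> N) (M : N -> V) (Mp : TE -> seq E)
  (y : TE -> R) (F : {set E}) (Eb : {set TE}) :
  (1 <= l)%N ->
  (forall (i : 'I_q) (X : {set V}), T i \subset X -> X \subset ~: S i ->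
      (l <= #|cut src dst X :&: El|)%N) ->
  (forall e, 0 <= x e <= 1) ->
  (forall e, e \in El -> x e = 1) ->
  (forall (i : 'I_q) (X : {set V}), T i \subset X -> X \subset ~: S i ->
      l%:R + 1 <= \sum_(e in cut src dst X) x e) ->
  1 <= beta ->
  tree_embedding src dst tsrc tdst M Mp (xtilde V x l beta) y ->
  F \subset large x l beta ->
  #|F| = l ->
  Eb \subset ~: Minv Mp F ->
  (forall AB : {set V} * {set V},
      inZF src dst tsrc tdst M Mp (large x l beta) F S T AB ->
      exists ua ub : N,
        [/\ leaf tsrc tdst ua, leaf tsrc tdst ub, M ua \in AB.1, M ub \in AB.2 &
            gconnect tsrc tdst Eb ua ub]) ->
  forall i : 'I_q, exists s t : V,
    [/\ s \in S i, t \in T i &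
        gconnect src dst ((large x l beta :|: Mimg Mp Eb) :\: F) s t].
Proof.
move=> _ _ _ _ _ _ [_ _ Hpath _] _ _ HEb HZ i.
set H' := large x l beta :\: F.
set G' := (large x l beta :|: Mimg Mp Eb) :\: F.
have HG : H' \subset G' by apply: setSD; apply: subsetUl.
have edge : forall u v, Defs.grel tsrc tdst Eb u v -> gconnect src dst G' (M u) (M v).
  move=> u v /existsP[f /andP[fEb h]].
  have fp : gconnect src dst G' (M (tsrc f)) (M (tdst f)).
    apply: path_gconnect (Hpath f) _ => e ep.
    have nF := subsetP HEb _ fEb; rewrite !inE in nF.
    rewrite !inE; apply/andP; split.
      apply/negP => eF; move/negP: nF; apply; apply/existsP; exists e; by rewrite eF.
    apply/orP; right; apply/existsP; exists f; by rewrite fEb.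
  case/orP: h => /andP[/eqP <- /eqP <-] //; by rewrite gconnect_sym.
have tmap : forall u v, gconnect tsrc tdst Eb u v -> gconnect src dst G' (M u) (M v).
  move=> u v /connectP[p]; elim: p u => [|w p IH] u /=.
    by move=> _ ->; exact: connect0.
  move=> /andP[uw pw] ev; apply: gconnect_trans (edge _ _ uw) _; exact: IH pw ev.
have [disj|ndisj] := boolP [disjoint Qof src dst H' (S i) & Qof src dst H' (T i)]; last first.
  move: ndisj; rewrite -setI_eq0 => /set0Pn[v /setIP[vS vT]].
  have [s sS vs] := Qof_mem vS; have [t tT vt] := Qof_mem vT.
  exists s, t; split => //; apply: (gconnect_mono HG).
  by apply: gconnect_trans vt; rewrite gconnect_sym.
set C := [set v | [exists s in S i, gconnect src dst G' s v]].
set Sh := shattered src dst tsrc tdst M Mp (large x l beta) F.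
set A' := [set Q in Sh | Q \subset C].
have hZ : inZF src dst tsrc tdst M Mp (large x l beta) F S T
    (cover A' :|: Qof src dst H' (S i), cover (Sh :\: A') :|: Qof src dst H' (T i)).
  exists A'; split.
    by apply/subsetP => Q; rewrite inE => /andP[].
  by exists i; split.
have [ua [ub [_ _ ha hb hc]]] := HZ _ hZ.
have key := tmap _ _ hc.
have hua : M ua \in C.
  case/setUP: ha.
    by move/bigcupP => [Q]; rewrite inE => /andP[_ /subsetP QC] /QC.
  move/Qof_mem => [s sS hs]; rewrite inE; apply/existsP; exists s; rewrite sS /=.
  by apply: (gconnect_mono HG); rewrite gconnect_sym.
have : M ub \in C.
  move: hua; rewrite !inE => /existsP[s /andP[sS hs]].
  apply/existsP; exists s; rewrite sS /=; exact: gconnect_trans hs key.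
rewrite inE => /existsP[s /andP[sS hs]].
case/setUP: hb.
  move/bigcupP => [Q]; rewrite !inE => /andP[QA QSh] ubQ.
  exfalso; move/negP: QA; apply; rewrite QSh /=.
  move: QSh => /andP[/imsetP[v0 _ QE] _].
  apply/subsetP => w; rewrite QE inE => hw.
  rewrite QE inE in ubQ.
  rewrite inE; apply/existsP; exists s; rewrite sS /=.
  apply: gconnect_trans hs _; apply: (gconnect_mono HG).
  by apply: gconnect_trans hw; rewrite gconnect_sym.
move/Qof_mem => [t tT ht]; exists s, t; split => //.
apply: gconnect_trans hs _; exact: (gconnect_mono HG).
Qed.
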